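(* Let $b$ be a prime, $m$ a positive integer, $N=b^m$, and $w\ge0$ an integer. For $k\in\mathbb{Z}$ let $$T_{N,w}(k)=\sum_{z\in\mathcal{Z}_{N,w}}\ \sum_{\substack{-N/2<h\le N/2\\ h\ne0}}\frac{e^{2\pi i h k b^{w} z/N}}{|h|}.$$ Then $$\sum_{k=1}^{N-1}\frac{|T_{N,w}(k)|}{|\mathcal{Z}_{N,w}|}\le 2b^{\min\{w,m\}}S_N.$$
   Context: $\mathcal{Z}_{N,w}=\{z\in\{1,\dots,b^{m-w}-1\}:\gcd(z,b^m)=1\}$ if $w<m$, and $\mathcal{Z}_{N,w}=\{1\}$ if $w\ge m$. $S_N=\sum_{-N/2<h\le N/2,\,h\ne0}\frac{1}{|h|}$. *)

(* Defs.v *)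
From Stdlib Require Import Reals ZArith List Znumtheory Lia.
From Coquelicot Require Import Coquelicot.
Import ListNotations.
Open Scope R_scope.

Definition lsumC (l : list Z) (f : Z -> C) : C :=
  fold_right (fun x acc => Cplus (f x) acc) (RtoC 0) l.
Definition lsumR (l : list Z) (f : Z -> R) : R :=
  fold_right (fun x acc => f x + acc) 0 l.

Definition Zrange (a b : Z) : list Z :=
  map (fun k => (a + Z.of_nat k)%Z) (seq 0 (Z.to_nat (b - a + 1))).

Definition cexp (t : R) : C := (cos t, sin t).

Definition Zset (b m w : nat) : list Z :=
  if (w <? m)%nat then
    filter (fun z => Z.eqb (Z.gcd z (Z.of_nat (b ^ m))) 1)
           (Zrange 1 (Z.of_nat (b ^ (m - w)) - 1))
  else [1%Z].

Definition Hset (N : Z) : list Z :=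
  filter (fun h => andb (Z.ltb (- N) (2 * h)) (andb (Z.leb (2 * h) N) (negb (Z.eqb h 0))))
         (Zrange (- N) N).

Definition S_N (N : Z) : R := lsumR (Hset N) (fun h => / IZR (Z.abs h)).

Definition T (b m w : nat) (k : Z) : C :=
  let N := Z.of_nat (b ^ m) in
  lsumC (Zset b m w) (fun z =>
    lsumC (Hset N) (fun h =>
      Cmult (cexp (2 * PI * IZR (h * k * Z.of_nat (b ^ w) * z) / IZR N))
            (RtoC (/ IZR (Z.abs h))))).

(* Main.v *)
Require Import Defs.
From Stdlib Require Import Reals ZArith List Znumtheory.
From Coquelicot Require Import Coquelicot.
Open Scope R_scope.
From Stdlib Require Import Lia Lra Zpow_facts.
Import ListNotations.

Definition LR {A} (l : list A) (f : A -> R) : R := fold_right (fun x acc => f x + acc) 0 l.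
Definition LC {A} (l : list A) (f : A -> C) : C := fold_right (fun x acc => Cplus (f x) acc) (RtoC 0) l.

Lemma LR_app {A} (l1 l2 : list A) f : LR (l1 ++ l2) f = LR l1 f + LR l2 f.
Proof. induction l1; simpl; [lra|]. unfold LR in *; simpl; rewrite IHl1; lra. Qed.
Lemma LC_app {A} (l1 l2 : list A) f : LC (l1 ++ l2) f = Cplus (LC l1 f) (LC l2 f).
Proof. induction l1; simpl. unfold LC; simpl. now rewrite Cplus_0_l.
 unfold LC in *; simpl; rewrite IHl1. now rewrite Cplus_assoc. Qed.
Lemma LR_ext {A} (l : list A) f g : (forall x, In x l -> f x = g x) -> LR l f = LR l g.
Proof. induction l; intros H; simpl; auto. unfold LR in *; simpl. rewrite H by (left; auto).
 rewrite IHl; auto. intros; apply H; right; auto. Qed.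
Lemma LC_ext {A} (l : list A) f g : (forall x, In x l -> f x = g x) -> LC l f = LC l g.
Proof. induction l; intros H; simpl; auto. unfold LC in *; simpl. rewrite H by (left; auto).
 rewrite IHl; auto. intros; apply H; right; auto. Qed.
Lemma LR_plus {A} (l : list A) f g : LR l (fun x => f x + g x) = LR l f + LR l g.
Proof. induction l; unfold LR in *; simpl; [lra|]. rewrite IHl; lra. Qed.
Lemma LC_plus {A} (l : list A) f g : LC l (fun x => Cplus (f x) (g x)) = Cplus (LC l f) (LC l g).
Proof. induction l; unfold LC in *; simpl. now rewrite Cplus_0_l. rewrite IHl.
 rewrite <- !Cplus_assoc. f_equal. rewrite (Cplus_comm (g a)), <- Cplus_assoc. f_equal. apply Cplus_comm. Qed.
Lemma LR_scal {A} (l : list A) c f : LR l (fun x => c * f x) = c * LR l f.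
Proof. induction l; unfold LR in *; simpl; [lra|]. rewrite IHl; lra. Qed.
Lemma LC_scal {A} (l : list A) c f : LC l (fun x => Cmult c (f x)) = Cmult c (LC l f).
Proof. induction l; unfold LC in *; simpl. now rewrite Cmult_0_r. rewrite IHl.
 now rewrite Cmult_plus_distr_l. Qed.
Lemma LC_scal_r {A} (l : list A) c f : LC l (fun x => Cmult (f x) c) = Cmult (LC l f) c.
Proof. rewrite Cmult_comm, <- LC_scal. apply LC_ext; intros; apply Cmult_comm. Qed.
Lemma LR_minus {A} (l : list A) f g : LR l (fun x => f x - g x) = LR l f - LR l g.
Proof. induction l; unfold LR in *; simpl; [lra|]. rewrite IHl; lra. Qed.
Lemma LR_le {A} (l : list A) f g : (forall x, In x l -> f x <= g x) -> LR l f <= LR l g.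
Proof. induction l; intros H; unfold LR in *; simpl; [lra|].
 apply Rplus_le_compat. apply H; left; auto. apply IHl; intros; apply H; right; auto. Qed.
Lemma LR_abs {A} (l : list A) f : Rabs (LR l f) <= LR l (fun x => Rabs (f x)).
Proof. induction l; unfold LR in *; simpl. rewrite Rabs_R0; lra.
 eapply Rle_trans. apply Rabs_triang. lra. Qed.
Lemma LC_RtoC {A} (l : list A) f : LC l (fun x => RtoC (f x)) = RtoC (LR l f).
Proof. induction l; unfold LC, LR in *; simpl; auto. rewrite IHl. now rewrite RtoC_plus. Qed.
Lemma LR_map {A B} (l : list A) (g : A -> B) f : LR (map g l) f = LR l (fun x => f (g x)).
Proof. induction l; unfold LR in *; simpl; auto. now rewrite IHl. Qed.
Lemma LC_map {A B} (l : list A) (g : A -> B) f : LC (map g l) f = LC l (fun x => f (g x)).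
Proof. induction l; unfold LC in *; simpl; auto. now rewrite IHl. Qed.
Lemma LR_filter {A} (l : list A) p f : LR (filter p l) f = LR l (fun x => if p x then f x else 0).
Proof. induction l; unfold LR in *; simpl; auto. destruct (p a); simpl; rewrite IHl; lra. Qed.
Lemma LC_filter {A} (l : list A) p f : LC (filter p l) f = LC l (fun x => if p x then f x else RtoC 0).
Proof. induction l; unfold LC in *; simpl; auto. destruct (p a); simpl; rewrite IHl; auto.
 now rewrite Cplus_0_l. Qed.
Lemma LR_const {A} (l : list A) c : LR l (fun _ => c) = INR (length l) * c.
Proof. induction l. unfold LR; simpl; lra.
 change (LR (a::l) (fun _ => c)) with (c + LR l (fun _ => c)). rewrite IHl.
 simpl length; rewrite S_INR; lra. Qed.
Lemma LR_nonneg {A} (l : list A) f : (forall x, In x l -> 0 <= f x) -> 0 <= LR l f.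
Proof. intros H. apply Rle_trans with (LR l (fun _ => 0)). rewrite LR_const; lra. now apply LR_le. Qed.

Lemma LC_swap {A B} (l1 : list A) (l2 : list B) f :
  LC l1 (fun x => LC l2 (f x)) = LC l2 (fun y => LC l1 (fun x => f x y)).
Proof. induction l1.
 - change (LC [] (fun x => LC l2 (f x))) with (RtoC 0).
   rewrite (LC_ext l2 (fun y => LC [] (fun x => f x y)) (fun _ => RtoC 0)) by reflexivity.
   rewrite LC_RtoC, LR_const, Rmult_0_r. reflexivity.
 - rewrite (LC_ext l2 (fun y => LC (a::l1) (fun x => f x y)) (fun y => Cplus (f a y) (LC l1 (fun x => f x y)))) by reflexivity.
   rewrite LC_plus, <- IHl1. reflexivity. Qed.
Lemma LR_swap {A B} (l1 : list A) (l2 : list B) f :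
  LR l1 (fun x => LR l2 (f x)) = LR l2 (fun y => LR l1 (fun x => f x y)).
Proof. induction l1.
 - change (LR [] (fun x => LR l2 (f x))) with 0.
   rewrite (LR_ext l2 (fun y => LR [] (fun x => f x y)) (fun _ => 0)) by reflexivity.
   rewrite LR_const; lra.
 - rewrite (LR_ext l2 (fun y => LR (a::l1) (fun x => f x y)) (fun y => f a y + LR l1 (fun x => f x y))) by reflexivity.
   rewrite LR_plus, <- IHl1. reflexivity. Qed.
Lemma LR_seqS n f : LR (seq 0 (S n)) f = LR (seq 0 n) f + f n.
Proof. rewrite seq_S, LR_app. unfold LR at 2; simpl; lra. Qed.
Lemma LC_seqS n f : LC (seq 0 (S n)) f = Cplus (LC (seq 0 n) f) (f n).
Proof. rewrite seq_S, LC_app. unfold LC at 2; simpl. now rewrite Cplus_0_r. Qed.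
Lemma LR_shift n f : LR (seq 0 (S n)) f = f 0%nat + LR (seq 0 n) (fun i => f (S i)).
Proof. simpl. rewrite <- seq_shift, LR_map. reflexivity. Qed.
Lemma LC_shift n f : LC (seq 0 (S n)) f = Cplus (f 0%nat) (LC (seq 0 n) (fun i => f (S i))).
Proof. simpl. rewrite <- seq_shift, LC_map. reflexivity. Qed.
Lemma seq_add_map a k : seq a k = map (fun i => a + i)%nat (seq 0 k).
Proof. revert a; induction k; intros; simpl; auto. f_equal. lia. rewrite <- seq_shift.
 rewrite IHk, map_map. symmetry. rewrite IHk, map_map. apply map_ext; intros; lia. Qed.
Lemma LR_split n k f : LR (seq 0 (n + k)) f = LR (seq 0 n) f + LR (seq 0 k) (fun i => f (n + i)%nat).
Proof. rewrite seq_app, LR_app, (seq_add_map (0+n) k), LR_map. reflexivity. Qed.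
Lemma LC_split n k f : LC (seq 0 (n + k)) f = Cplus (LC (seq 0 n) f) (LC (seq 0 k) (fun i => f (n + i)%nat)).
Proof. rewrite seq_app, LC_app, (seq_add_map (0+n) k), LC_map. reflexivity. Qed.
Lemma LR_rev n f : LR (seq 0 n) f = LR (seq 0 n) (fun i => f (n - 1 - i)%nat).
Proof. induction n. reflexivity. rewrite LR_seqS, LR_shift, IHn.
 replace (S n - 1 - 0)%nat with n by lia. rewrite Rplus_comm. f_equal. apply LR_ext; intros; f_equal; lia. Qed.
Lemma LR_extend n n' f : (n <= n')%nat -> (forall i, (n <= i < n')%nat -> f i = 0) ->
  LR (seq 0 n') f = LR (seq 0 n) f.
Proof. intros H1 H2. replace n' with (n + (n' - n))%nat by lia. rewrite LR_split.
 rewrite (LR_ext (seq 0 (n' - n)) _ (fun _ => 0)). rewrite LR_const; lra.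
 intros x Hx. apply in_seq in Hx. apply H2; lia. Qed.

Definition dvn (d i : nat) : bool := Nat.eqb (i mod d) 0.

Lemma LR_mult d q f : (0 < d)%nat ->
  LR (seq 0 (d * q)) (fun i => if dvn d i then f i else 0) = LR (seq 0 q) (fun y => f (d * y)%nat).
Proof. intros Hd. induction q. rewrite Nat.mul_0_r; reflexivity.
 replace (d * S q)%nat with (d * q + d)%nat by lia. rewrite LR_split, IHq, LR_seqS. f_equal.
 destruct d as [|d']; [lia|]. rewrite LR_shift. unfold dvn.
 replace (S d' * q + 0)%nat with (S d' * q)%nat by lia.
 rewrite (Nat.mul_comm (S d') q), Nat.Div0.mod_mul, Nat.eqb_refl.
 rewrite (LR_ext _ _ (fun _ => 0)). rewrite LR_const; lra.
 intros x Hx. apply in_seq in Hx.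
 replace ((q * S d' + S x) mod S d')%nat with (S x) . destruct (Nat.eqb_spec (S x) 0); [lia|auto].
 rewrite Nat.add_comm, Nat.Div0.mod_add. rewrite Nat.mod_small; lia. Qed.

Lemma LC_mult d q f : (0 < d)%nat ->
  LC (seq 0 (d * q)) (fun i => if dvn d i then f i else RtoC 0) = LC (seq 0 q) (fun y => f (d * y)%nat).
Proof. intros Hd. induction q. rewrite Nat.mul_0_r; reflexivity.
 replace (d * S q)%nat with (d * q + d)%nat by lia. rewrite LC_split, IHq, LC_seqS. f_equal.
 destruct d as [|d']; [lia|]. rewrite LC_shift. unfold dvn.
 replace (S d' * q + 0)%nat with (S d' * q)%nat by lia.
 rewrite (Nat.mul_comm (S d') q), Nat.Div0.mod_mul, Nat.eqb_refl.
 rewrite (LC_ext _ _ (fun _ => RtoC 0)). 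
 rewrite LC_RtoC, LR_const, Rmult_0_r. now rewrite Cplus_0_r.
 intros x Hx. apply in_seq in Hx.
 replace ((q * S d' + S x) mod S d')%nat with (S x) . destruct (Nat.eqb_spec (S x) 0); [lia|auto].
 rewrite Nat.add_comm, Nat.Div0.mod_add. rewrite Nat.mod_small; lia. Qed.

Lemma cexp_add a b : Cmult (cexp a) (cexp b) = cexp (a + b).
Proof. unfold cexp, Cmult; simpl. rewrite cos_plus, sin_plus. f_equal; ring. Qed.

Lemma cexp_int z : cexp (2 * PI * IZR z) = RtoC 1.
Proof. unfold cexp. assert (Hs : sin (PI * IZR z) = 0).
 { apply sin_eq_0_1. exists z; ring. }
 replace (2 * PI * IZR z) with (2 * (PI * IZR z)) by ring.
 rewrite cos_2a_sin, sin_2a, Hs. unfold RtoC. f_equal; ring. Qed.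

Lemma cexp_one t : cexp t = RtoC 1 -> exists k : Z, t = 2 * PI * IZR k.
Proof. intros H. unfold cexp, RtoC in H. injection H as H1 H2.
 replace t with (2 * (t/2)) in H1 by field. rewrite cos_2a_sin in H1.
 assert (Hs : sin (t/2) = 0) by nra. apply sin_eq_0_0 in Hs. destruct Hs as [k Hk].
 exists k. replace t with (2 * (t/2)) by field. rewrite Hk. ring. Qed.

Definition dvz (d x : Z) : bool := Z.eqb (x mod d) 0.
Lemma dvz_spec d x : d <> 0%Z -> (dvz d x = true <-> (d | x)%Z).
Proof. intros Hd. unfold dvz. rewrite Z.eqb_eq. apply Z.mod_divide; auto. Qed.

Definition GS (L : Z) (D : nat) (n : Z) : C :=
  LC (seq 0 D) (fun k => cexp (2 * PI * IZR (n * Z.of_nat k) / IZR L)).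

Lemma Cmult_eq0 x y : x <> RtoC 0 -> Cmult x y = RtoC 0 -> y = RtoC 0.
Proof. intros Hx H. transitivity (Cmult (Cinv x) (Cmult x y)).
 rewrite Cmult_assoc, Cinv_l by auto. now rewrite Cmult_1_l.
 rewrite H. apply Cmult_0_r. Qed.

Lemma geo L D n : (0 < L)%Z -> (L | Z.of_nat D)%Z ->
  GS L D n = if dvz L n then RtoC (INR D) else RtoC 0.
Proof. intros HL HD. assert (HLr : IZR L <> 0) by (apply not_0_IZR; lia).
 destruct (dvz L n) eqn:E.
 - apply dvz_spec in E; [|lia]. destruct E as [q Hq]. unfold GS.
   rewrite (LC_ext _ _ (fun _ => RtoC 1)). rewrite LC_RtoC, LR_const, length_seq, Rmult_1_r; auto.
   intros k _. rewrite Hq. replace (2 * PI * IZR (q * L * Z.of_nat k) / IZR L) with (2 * PI * IZR (q * Z.of_nat k)).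
   apply cexp_int. rewrite !mult_IZR. field; auto.
 - set (w := cexp (2 * PI * IZR n / IZR L)).
   assert (Hgen : forall D', Cmult (Cminus w (RtoC 1)) (GS L D' n) =
        Cminus (cexp (2 * PI * IZR (n * Z.of_nat D') / IZR L)) (RtoC 1)).
   { induction D'. unfold GS; simpl. replace (2 * PI * IZR (n * 0) / IZR L) with (2 * PI * IZR 0).
     rewrite cexp_int. unfold LC; simpl. ring. rewrite Z.mul_0_r; simpl; field; auto.
     unfold GS in *. rewrite LC_seqS. rewrite Cmult_plus_distr_l, IHD'.
     assert (Cmult w (cexp (2 * PI * IZR (n * Z.of_nat D') / IZR L)) = cexp (2 * PI * IZR (n * Z.of_nat (S D')) / IZR L)).
     { unfold w; rewrite cexp_add. f_equal. rewrite Nat2Z.inj_succ, <- Z.add_1_r, Z.mul_add_distr_l, plus_IZR, Z.mul_1_r.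
       field; auto. }
     rewrite <- H. ring. }
   specialize (Hgen D). destruct HD as [q Hq]. rewrite Hq in Hgen.
   replace (2 * PI * IZR (n * (q * L)) / IZR L) with (2 * PI * IZR (n * q)) in Hgen.
   2:{ rewrite !mult_IZR. field; auto. }
   rewrite cexp_int in Hgen. replace (Cminus (RtoC 1) (RtoC 1)) with (RtoC 0) in Hgen by ring.
   apply Cmult_eq0 in Hgen; auto. intros Hw. apply Ceq_minus in Hw. apply cexp_one in Hw.
   destruct Hw as [k Hk]. assert (IZR n = IZR (k * L)).
   { rewrite mult_IZR. apply (Rmult_eq_reg_l (2 * PI)). 2:{ generalize PI_RGT_0; lra. }
     apply (Rmult_eq_reg_r (/ IZR L)). 2: apply Rinv_neq_0_compat; auto.
     transitivity (2 * PI * IZR n / IZR L). unfold Rdiv; ring. rewrite Hk. field; auto. }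
   apply eq_IZR in H. assert (dvz L n = true). apply dvz_spec; [lia|]. exists k; auto. congruence.
Qed.

Section P3sec.
Local Open Scope Z_scope.

Lemma exact_div a g : g <> 0 -> (g | a) -> a = g * (a / g).
Proof. intros Hg [q Hq]. subst. rewrite Z.div_mul by auto. ring. Qed.

Lemma gcd_one B z m : prime B -> (0 < m)%nat -> (Z.gcd z (B ^ Z.of_nat m) = 1 <-> ~ (B | z)).
Proof. intros HB Hm. assert (H2 := prime_ge_2 _ HB). split.
 - intros H Hd. assert (B | Z.gcd z (B ^ Z.of_nat m)).
   { apply Z.gcd_greatest; auto. replace (Z.of_nat m) with (Z.succ (Z.of_nat (m - 1))) by lia.
     rewrite Z.pow_succ_r by lia. apply Z.divide_mul_l, Z.divide_refl. }
   rewrite H in H0. apply Z.divide_1_r in H0. lia.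
 - intros H. apply Zgcd_1_rel_prime. apply Zpow_facts.rel_prime_Zpower_r. lia. apply rel_prime_sym.
   apply prime_rel_prime; auto. Qed.

Lemma powdiv B j d : prime B -> 0 < d -> (d | B ^ Z.of_nat j) -> exists t, (t <= j)%nat /\ d = B ^ Z.of_nat t.
Proof. intros HB. assert (H2 := prime_ge_2 _ HB). revert d. induction j; intros d Hd Hdv.
 - exists 0%nat. split; auto. simpl in *. apply Z.divide_1_r in Hdv. lia.
 - rewrite Nat2Z.inj_succ, Z.pow_succ_r in Hdv by lia.
   destruct (Zdivide_dec B d) as [Hb|Hb].
   + destruct Hb as [d' Hd']. subst d. rewrite Z.mul_comm in Hdv. apply Z.mul_divide_cancel_l in Hdv; [|lia].
     destruct (IHj d') as [t [Ht1 Ht2]]; auto. nia. exists (S t). split. lia.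
     rewrite Nat2Z.inj_succ, Z.pow_succ_r by lia. rewrite Ht2; ring.
   + apply Z.gauss in Hdv. destruct (IHj d Hd Hdv) as [t [Ht1 Ht2]]. exists t; split; auto.
     apply Zgcd_1_rel_prime. apply rel_prime_sym. apply prime_rel_prime; auto. Qed.

Lemma gcd_same B j k : prime B -> ~ (B * B ^ Z.of_nat j | k) ->
  Z.gcd (B * B ^ Z.of_nat j) k = Z.gcd (B ^ Z.of_nat j) k.
Proof. intros HB Hk. assert (H2 := prime_ge_2 _ HB).
 assert (Hp : 0 < B ^ Z.of_nat j) by (apply Z.pow_pos_nonneg; lia).
 set (g := Z.gcd (B * B ^ Z.of_nat j) k).
 assert (Hg0 : 0 < g). { assert (0 <= g) by apply Z.gcd_nonneg.
   assert (g <> 0). intros E. apply Z.gcd_eq_0_l in E. nia. lia. }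
 assert (Hg1 : (g | B ^ Z.of_nat (S j))). { rewrite Nat2Z.inj_succ, Z.pow_succ_r by lia. apply Z.gcd_divide_l. }
 destruct (powdiv B (S j) g HB Hg0 Hg1) as [t [Ht1 Ht2]].
 assert (t <> S j). { intros E. subst t. apply Hk. rewrite Nat2Z.inj_succ, Z.pow_succ_r in Ht2 by lia.
   rewrite <- Ht2. apply Z.gcd_divide_r. }
 apply Z.divide_antisym_nonneg. apply Z.gcd_nonneg. apply Z.gcd_nonneg.
 - apply Z.gcd_greatest. 2: apply Z.gcd_divide_r. fold g. rewrite Ht2.
   exists (B ^ (Z.of_nat j - Z.of_nat t)). rewrite <- Z.pow_add_r by lia. f_equal. lia.
 - apply Z.gcd_greatest. 2: apply Z.gcd_divide_r. apply Z.divide_trans with (B ^ Z.of_nat j).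
   apply Z.gcd_divide_l. apply Z.divide_factor_r. Qed.

Lemma divgcd d k h : 0 < d -> ((d | h * k) <-> (d / Z.gcd d k | h)).
Proof. intros Hd. set (g := Z.gcd d k).
 assert (Hg0 : 0 < g). { assert (0 <= g) by apply Z.gcd_nonneg.
   assert (g <> 0). intros E. apply Z.gcd_eq_0_l in E. lia. lia. }
 assert (Ed : d = g * (d / g)) by (apply exact_div; [lia| apply Z.gcd_divide_l]).
 assert (Ek : k = g * (k / g)) by (apply exact_div; [lia| apply Z.gcd_divide_r]).
 assert (Hc : Z.gcd (d / g) (k / g) = 1) by (apply Z.gcd_div_gcd; auto; lia).
 split; intros H.
 - rewrite Ed, Ek in H. replace (h * (g * (k / g))) with (g * (k / g * h)) in H by ring.
   apply Z.mul_divide_cancel_l in H; [|lia]. eapply Z.gauss; eauto.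
 - rewrite Ed, Ek. replace (h * (g * (k / g))) with (g * (h * (k / g))) by ring.
   apply Z.mul_divide_cancel_l; [lia|]. apply Z.divide_mul_l; auto. Qed.

End P3sec.

Definition hc (N h : Z) : bool := andb (Z.ltb (- N) (2 * h)) (andb (Z.leb (2 * h) N) (negb (Z.eqb h 0))).

Lemma Hset_sum N F : LR (Hset N) F = LR (Zrange (-N) N) (fun h => if hc N h then F h else 0).
Proof. unfold Hset. rewrite LR_filter. reflexivity. Qed.

Lemma Zrange_sym N F : (0 <= N)%Z ->
  LR (Zrange (-N) N) F = LR (seq 0 (S (Z.to_nat N))) (fun i => F (Z.of_nat i))
                         + LR (seq 0 (S (Z.to_nat N))) (fun i => F (- Z.of_nat i)%Z) - F 0%Z.
Proof. intros HN. unfold Zrange. rewrite LR_map.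
 replace (Z.to_nat (N - - N + 1)) with (Z.to_nat N + S (Z.to_nat N))%nat by lia.
 rewrite LR_split. rewrite (LR_shift (Z.to_nat N) (fun i => F (- Z.of_nat i)%Z)).
 rewrite (LR_ext (seq 0 (S (Z.to_nat N))) (fun i => F (- N + Z.of_nat (Z.to_nat N + i))%Z) (fun i => F (Z.of_nat i))).
 2:{ intros; f_equal; lia. }
 rewrite LR_rev. rewrite (LR_ext (seq 0 (Z.to_nat N)) _ (fun i => F (- Z.of_nat (S i))%Z)).
 2:{ intros x Hx. apply in_seq in Hx. f_equal. lia. }
 replace (- Z.of_nat 0)%Z with 0%Z by lia. lra. Qed.

Lemma reidx (dn : nat) (c : Z -> bool) (Nn : nat) : (1 <= dn)%nat ->
  (forall i : nat, (i > Nn)%nat -> c (Z.of_nat i) = false) ->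
  LR (seq 0 (S Nn)) (fun i => if c (Z.of_nat i) then (if dvz (Z.of_nat dn) (Z.of_nat i) then / IZR (Z.of_nat i) else 0) else 0)
  = LR (seq 0 (S Nn)) (fun y => if c (Z.of_nat (dn * y)) then / IZR (Z.of_nat (dn * y)) else 0).
Proof. intros Hd Hc. rewrite <- (LR_extend (S Nn) (dn * S Nn)). 2: nia.
 2:{ intros i Hi. rewrite Hc by lia. auto. }
 rewrite <- (LR_mult dn (S Nn) (fun i => if c (Z.of_nat i) then / IZR (Z.of_nat i) else 0)) by lia. apply LR_ext. intros i _.
 unfold dvz, dvn. rewrite <- Nat2Z.inj_mod.
 destruct (Nat.eqb_spec (i mod dn) 0) as [E|E]. rewrite E. simpl. auto.
 destruct (Z.eqb_spec (Z.of_nat (i mod dn)) 0). lia. destruct (c (Z.of_nat i)); auto. Qed.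

Definition Qp (N d : Z) (y : nat) : R := if andb (Z.leb 1 (Z.of_nat y)) (Z.leb (2 * d * Z.of_nat y) N) then / INR y else 0.
Definition Qn (N d : Z) (y : nat) : R := if andb (Z.leb 1 (Z.of_nat y)) (Z.ltb (2 * d * Z.of_nat y) N) then / INR y else 0.

Definition Cd (N d : Z) : R := LR (Hset N) (fun h => if dvz d h then / IZR (Z.abs h) else 0).

Lemma Cd_formula N dn : (0 <= N)%Z -> (1 <= dn)%nat ->
  INR dn * Cd N (Z.of_nat dn) = LR (seq 0 (S (Z.to_nat N))) (Qp N (Z.of_nat dn))
                               + LR (seq 0 (S (Z.to_nat N))) (Qn N (Z.of_nat dn)).
Proof. intros HN Hd. unfold Cd. rewrite Hset_sum, Zrange_sym by auto.
 assert (H0 : hc N 0 = false) by (unfold hc; rewrite Z.eqb_refl; simpl; rewrite !Bool.andb_false_r; reflexivity).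
 rewrite H0.
 rewrite Rminus_0_r, Rmult_plus_distr_l.
 rewrite (LR_ext _ (fun i => if hc N (Z.of_nat i) then _ else 0)
   (fun i => if hc N (Z.of_nat i) then (if dvz (Z.of_nat dn) (Z.of_nat i) then / IZR (Z.of_nat i) else 0) else 0)).
 2:{ intros i _. rewrite Z.abs_eq by lia. auto. }
 rewrite (LR_ext _ (fun i => if hc N (- Z.of_nat i)%Z then _ else 0)
   (fun i => if (fun x => hc N (- x)%Z) (Z.of_nat i) then (if dvz (Z.of_nat dn) (Z.of_nat i) then / IZR (Z.of_nat i) else 0) else 0)).
 2:{ intros i _. rewrite Z.abs_opp, Z.abs_eq by lia.
     assert (dvz (Z.of_nat dn) (- Z.of_nat i) = dvz (Z.of_nat dn) (Z.of_nat i)).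
     { destruct (dvz (Z.of_nat dn) (Z.of_nat i)) eqn:E1; destruct (dvz (Z.of_nat dn) (- Z.of_nat i)) eqn:E2; auto.
       - apply dvz_spec in E1; [|lia]. apply (proj2 (Z.divide_opp_r _ _)) in E1. apply dvz_spec in E1; [congruence|lia].
       - apply dvz_spec in E2; [|lia]. apply (proj1 (Z.divide_opp_r _ _)) in E2. apply dvz_spec in E2; [congruence|lia]. }
     rewrite H. auto. }
 rewrite (reidx dn (hc N)); auto.
 2:{ intros i Hi. unfold hc. destruct (Z.leb_spec (2 * Z.of_nat i) N); destruct (Z.ltb_spec (- N) (2 * Z.of_nat i)); simpl; auto; lia. }
 rewrite (reidx dn (fun x => hc N (- x)%Z)); auto.
 2:{ intros i Hi. unfold hc. destruct (Z.leb_spec (2 * - Z.of_nat i) N); destruct (Z.ltb_spec (- N) (2 * - Z.of_nat i)); simpl; auto; lia. }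
 rewrite <- !LR_scal. f_equal; apply LR_ext; intros y _; unfold hc, Qp, Qn.
 - rewrite Nat2Z.inj_mul.
   destruct (Z.leb_spec 1 (Z.of_nat y)); destruct (Z.leb_spec (2 * Z.of_nat dn * Z.of_nat y) N);
   destruct (Z.leb_spec (2 * (Z.of_nat dn * Z.of_nat y)) N);
   destruct (Z.ltb_spec (- N) (2 * (Z.of_nat dn * Z.of_nat y)));
   destruct (Z.eqb_spec (Z.of_nat dn * Z.of_nat y) 0); simpl; try lra; try lia.
   rewrite mult_IZR, <- !INR_IZR_INZ. field.
   split; apply not_0_INR; lia.
 - rewrite Nat2Z.inj_mul.
   destruct (Z.leb_spec 1 (Z.of_nat y)); destruct (Z.ltb_spec (2 * Z.of_nat dn * Z.of_nat y) N);
   destruct (Z.leb_spec (2 * - (Z.of_nat dn * Z.of_nat y)) N);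
   destruct (Z.ltb_spec (- N) (2 * - (Z.of_nat dn * Z.of_nat y)));
   destruct (Z.eqb_spec (- (Z.of_nat dn * Z.of_nat y)) 0); simpl; try lra; try lia.
   rewrite mult_IZR, <- !INR_IZR_INZ. field.
   split; apply not_0_INR; lia.
Qed.

Lemma Qp_mono N d e y : (1 <= d <= e)%Z -> Qp N e y <= Qp N d y.
Proof. intros H. unfold Qp. destruct (Z.leb_spec 1 (Z.of_nat y)); cbn [andb]; try lra.
 destruct (Z.leb_spec (2 * e * Z.of_nat y) N); destruct (Z.leb_spec (2 * d * Z.of_nat y) N); try lra; try nia.
 left; apply Rinv_0_lt_compat; apply lt_0_INR; lia. Qed.
Lemma Qn_mono N d e y : (1 <= d <= e)%Z -> Qn N e y <= Qn N d y.
Proof. intros H. unfold Qn. destruct (Z.leb_spec 1 (Z.of_nat y)); cbn [andb]; try lra.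
 destruct (Z.ltb_spec (2 * e * Z.of_nat y) N); destruct (Z.ltb_spec (2 * d * Z.of_nat y) N); try lra; try nia.
 left; apply Rinv_0_lt_compat; apply lt_0_INR; lia. Qed.

Lemma Cd_mono N dn bn : (0 <= N)%Z -> (1 <= dn)%nat -> (1 <= bn)%nat ->
  INR bn * Cd N (Z.of_nat (bn * dn)) <= Cd N (Z.of_nat dn).
Proof. intros HN Hd Hb.
 assert (H1 := Cd_formula N (bn * dn) HN ltac:(nia)).
 assert (H2 := Cd_formula N dn HN Hd).
 assert (Hle : LR (seq 0 (S (Z.to_nat N))) (Qp N (Z.of_nat (bn * dn))) + LR (seq 0 (S (Z.to_nat N))) (Qn N (Z.of_nat (bn * dn)))
   <= LR (seq 0 (S (Z.to_nat N))) (Qp N (Z.of_nat dn)) + LR (seq 0 (S (Z.to_nat N))) (Qn N (Z.of_nat dn))).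
 { apply Rplus_le_compat; apply LR_le; intros y _. apply Qp_mono; nia. apply Qn_mono; nia. }
 rewrite <- H1, <- H2 in Hle. rewrite mult_INR in Hle.
 assert (0 < INR dn) by (apply lt_0_INR; lia).
 apply (Rmult_le_reg_l (INR dn)); auto. lra. Qed.

Lemma inv_nonneg x : 0 <= x -> 0 <= / x.
Proof. intros H. destruct (Req_dec x 0). subst; rewrite Rinv_0; lra.
 left; apply Rinv_0_lt_compat; lra. Qed.

Lemma S_N_nonneg N : 0 <= S_N N.
Proof. unfold S_N. apply LR_nonneg. intros; apply inv_nonneg, IZR_le; lia. Qed.

Lemma RtoC_inj x y : RtoC x = RtoC y -> x = y.
Proof. intros H. unfold RtoC in H. now injection H. Qed.

(* the Ramanujan-type sum *)
Definition rr (Mz Mbz n : Z) : R :=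
  (if dvz Mz n then IZR Mz else 0) - (if dvz Mbz n then IZR Mbz else 0).

Lemma c_val b m w j n : prime (Z.of_nat b) -> (w < m)%nat -> (m - w = S j)%nat ->
  LC (Zset b m w) (fun z => cexp (2 * PI * IZR (n * z) / IZR (Z.of_nat (b ^ (m - w)))))
  = RtoC (rr (Z.of_nat (b ^ (m - w))) (Z.of_nat (b ^ j)) n).
Proof. intros hb hw hj. assert (H2 := prime_ge_2 _ hb).
 assert (Hbj : (0 < b ^ j)%nat) by (apply Nat.neq_0_lt_0, Nat.pow_nonzero; lia).
 assert (HM : (b ^ (m - w) = b * b ^ j)%nat) by (rewrite hj; reflexivity).
 set (e := fun z : Z => cexp (2 * PI * IZR (n * z) / IZR (Z.of_nat (b ^ (m - w))))).
 unfold Zset. rewrite <- Nat.ltb_lt in hw. rewrite hw. rewrite LC_filter. unfold Zrange. rewrite LC_map.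
 set (Mn := (b ^ (m - w))%nat) in *.
 replace (Z.to_nat (Z.of_nat Mn - 1 - 1 + 1)) with (Mn - 1)%nat by lia.
 set (g := fun z : Z => if (Z.gcd z (Z.of_nat (b ^ m)) =? 1)%Z then e z else RtoC 0).
 change (LC (seq 0 (Mn - 1)) (fun x => g (1 + Z.of_nat x)%Z) = RtoC (rr (Z.of_nat Mn) (Z.of_nat (b ^ j)) n)).
 assert (Hg0 : g 0%Z = RtoC 0).
 { unfold g. rewrite Z.gcd_0_l. destruct (Z.eqb_spec (Z.abs (Z.of_nat (b ^ m))) 1); auto.
   exfalso. assert (b ^ m >= b ^ 1)%nat by (apply Nat.pow_le_mono_r; lia). simpl in H. lia. }
 transitivity (LC (seq 0 Mn) (fun i => g (Z.of_nat i))).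
 { replace Mn with (S (Mn - 1)) at 2 by lia. rewrite LC_shift. simpl (Z.of_nat 0). rewrite Hg0, Cplus_0_l.
   apply LC_ext; intros; f_equal; lia. }
 assert (Hgd : forall i : nat, g (Z.of_nat i) = Cplus (e (Z.of_nat i)) (Cmult (RtoC (-1)) (if dvn b i then e (Z.of_nat i) else RtoC 0))).
 { intros i. unfold g. rewrite Nat2Z.inj_pow.
   destruct (Z.eqb_spec (Z.gcd (Z.of_nat i) (Z.of_nat b ^ Z.of_nat m)) 1) as [E|E];
   destruct (dvn b i) eqn:D; unfold dvn in D.
   - apply gcd_one in E; auto; [|lia]. exfalso; apply E. apply Nat.eqb_eq in D.
     apply Nat.Div0.mod_divides in D. destruct D as [c Hc]. exists (Z.of_nat c). subst i. lia.
   - ring.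
   - ring.
   - exfalso; apply E. apply gcd_one; auto; [lia|]. intros [c Hc]. apply Nat.eqb_neq in D. apply D.
     apply Nat.Div0.mod_divides. exists (Z.to_nat c). nia. }
 rewrite (LC_ext _ _ _ (fun i _ => Hgd i)). rewrite LC_plus, LC_scal.
 replace (LC (seq 0 Mn) (fun x : nat => if dvn b x then e (Z.of_nat x) else RtoC 0))
   with (LC (seq 0 (b * b ^ j)) (fun x : nat => if dvn b x then e (Z.of_nat x) else RtoC 0)) by (rewrite HM; auto).
 rewrite (LC_mult b (b ^ j) (fun i => e (Z.of_nat i))) by lia.
 unfold e. fold (GS (Z.of_nat Mn) Mn n).
 rewrite (LC_ext (seq 0 (b ^ j)) _ (fun y => cexp (2 * PI * IZR (n * Z.of_nat y) / IZR (Z.of_nat (b ^ j))))).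
 2:{ intros y _. unfold e. f_equal. rewrite HM, !Nat2Z.inj_mul, !mult_IZR. field.
     split; apply not_0_IZR; lia. }
 fold (GS (Z.of_nat (b ^ j)) (b ^ j) n).
 rewrite (geo (Z.of_nat Mn) Mn n), (geo (Z.of_nat (b ^ j)) (b ^ j) n); try lia; try apply Z.divide_refl.
 unfold rr. rewrite !INR_IZR_INZ.
 destruct (dvz (Z.of_nat Mn) n); destruct (dvz (Z.of_nat (b ^ j)) n);
 unfold RtoC, Cplus, Cmult; simpl; f_equal; ring.
Qed.

Lemma T_expr b m w k : (0 < b)%nat -> (w < m)%nat ->
  T b m w k = LC (Zset b m w) (fun z => LC (Hset (Z.of_nat (b ^ m))) (fun h =>
     Cmult (cexp (2 * PI * IZR ((h * k) * z) / IZR (Z.of_nat (b ^ (m - w))))) (RtoC (/ IZR (Z.abs h))))).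
Proof. intros Hb hw. unfold T. change lsumC with (@LC Z). apply LC_ext; intros z _. apply LC_ext; intros h _.
 f_equal. f_equal.
 assert (E : (b ^ m = b ^ (m - w) * b ^ w)%nat) by (rewrite <- Nat.pow_add_r; f_equal; lia).
 assert (0 < b ^ w)%nat by (apply Nat.neq_0_lt_0, Nat.pow_nonzero; lia).
 assert (0 < b ^ (m - w))%nat by (apply Nat.neq_0_lt_0, Nat.pow_nonzero; lia).
 rewrite E, Nat2Z.inj_mul, !mult_IZR. field. split; apply not_0_IZR; lia. Qed.

Definition Rk b m w j k : R := LR (Hset (Z.of_nat (b ^ m)))
  (fun h => rr (Z.of_nat (b ^ (m - w))) (Z.of_nat (b ^ j)) (h * k) * / IZR (Z.abs h)).

Lemma T_real b m w j k : prime (Z.of_nat b) -> (w < m)%nat -> (m - w = S j)%nat ->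
  T b m w k = RtoC (Rk b m w j k).
Proof. intros hb hw hj. assert (H2 := prime_ge_2 _ hb). rewrite T_expr by lia. rewrite LC_swap.
 unfold Rk. rewrite <- LC_RtoC. apply LC_ext; intros h _.
 rewrite LC_scal_r. rewrite (c_val b m w j (h * k)) by auto. now rewrite RtoC_mult. Qed.

Lemma Zset_len b m w j : prime (Z.of_nat b) -> (w < m)%nat -> (m - w = S j)%nat ->
  INR (length (Zset b m w)) = IZR (Z.of_nat (b ^ (m - w))) - IZR (Z.of_nat (b ^ j)).
Proof. intros hb hw hj. assert (H2 := prime_ge_2 _ hb).
 assert (H := c_val b m w j 0 hb hw hj).
 rewrite (LC_ext _ _ (fun _ => RtoC 1)) in H.
 2:{ intros z _. rewrite Z.mul_0_l. replace (2 * PI * IZR 0 / IZR (Z.of_nat (b ^ (m - w)))) with (2 * PI * IZR 0).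
     apply cexp_int. simpl; unfold Rdiv; ring. }
 rewrite LC_RtoC, LR_const, Rmult_1_r in H. apply RtoC_inj in H. rewrite H. unfold rr.
 assert (0 < b ^ j)%nat by (apply Nat.neq_0_lt_0, Nat.pow_nonzero; lia).
 assert (0 < b ^ (m - w))%nat by (apply Nat.neq_0_lt_0, Nat.pow_nonzero; lia).
 replace (dvz (Z.of_nat (b ^ (m - w))) 0) with true. replace (dvz (Z.of_nat (b ^ j)) 0) with true. auto.
 symmetry; apply dvz_spec; [lia|apply Z.divide_0_r].
 symmetry; apply dvz_spec; [lia|apply Z.divide_0_r]. Qed.

Lemma dvz_iff d x : (0 < d)%Z -> dvz d x = true <-> (d | x)%Z.
Proof. intros; apply dvz_spec; lia. Qed.

Lemma dvz_eq d1 x1 d2 x2 : (0 < d1)%Z -> (0 < d2)%Z -> ((d1 | x1)%Z <-> (d2 | x2)%Z) -> dvz d1 x1 = dvz d2 x2.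
Proof. intros H1 H2 H. destruct (dvz d1 x1) eqn:E1; destruct (dvz d2 x2) eqn:E2; auto.
 - apply dvz_iff in E1; auto. apply H in E1. apply dvz_iff in E1; auto. congruence.
 - apply dvz_iff in E2; auto. apply H in E2. apply dvz_iff in E2; auto. congruence. Qed.

Lemma Rk_div b m w j k : prime (Z.of_nat b) -> (m - w = S j)%nat ->
  (Z.of_nat (b ^ (m - w)) | k)%Z ->
  Rk b m w j k = (IZR (Z.of_nat (b ^ (m - w))) - IZR (Z.of_nat (b ^ j))) * S_N (Z.of_nat (b ^ m)).
Proof. intros hb hj Hk. assert (H2 := prime_ge_2 _ hb).
 assert (0 < b ^ j)%nat by (apply Nat.neq_0_lt_0, Nat.pow_nonzero; lia).
 assert (HM : (b ^ (m - w) = b * b ^ j)%nat) by (rewrite hj; reflexivity).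
 unfold Rk, S_N. change lsumR with (@LR Z). rewrite <- LR_scal. apply LR_ext; intros h _. unfold rr.
 replace (dvz (Z.of_nat (b ^ (m - w))) (h * k)) with true.
 replace (dvz (Z.of_nat (b ^ j)) (h * k)) with true. auto.
 - symmetry; apply dvz_iff; [lia|]. apply Z.divide_mul_r. eapply Z.divide_trans; [|apply Hk].
   rewrite HM, Nat2Z.inj_mul. apply Z.divide_factor_r.
 - symmetry; apply dvz_iff. rewrite HM; lia. apply Z.divide_mul_r; auto. Qed.

Lemma Rk_neg b m w j k : prime (Z.of_nat b) -> (m - w = S j)%nat ->
  ~ (Z.of_nat (b ^ (m - w)) | k)%Z -> Rk b m w j k <= 0.
Proof. intros hb hj Hk. assert (H2 := prime_ge_2 _ hb).
 assert (EMb : Z.of_nat (b ^ j) = ((Z.of_nat b) ^ Z.of_nat j)%Z) by apply Nat2Z.inj_pow.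
 assert (EM : Z.of_nat (b ^ (m - w)) = ((Z.of_nat b) * (Z.of_nat b) ^ Z.of_nat j)%Z) by (rewrite hj, Nat2Z.inj_pow, Nat2Z.inj_succ, Z.pow_succ_r; lia).
 set (Mb := ((Z.of_nat b) ^ Z.of_nat j)%Z) in *.
 assert (HMb : (0 < Mb)%Z) by (apply Z.pow_pos_nonneg; lia).
 unfold Rk. rewrite EM, EMb in *.
 set (g := Z.gcd ((Z.of_nat b) * Mb) k).
 assert (Hg : g = Z.gcd Mb k) by (apply gcd_same; auto).
 assert (Hg0 : (0 < g)%Z). { assert (0 <= g)%Z by apply Z.gcd_nonneg.
   assert (g <> 0)%Z. intros E. apply Z.gcd_eq_0_l in E. lia. lia. }
 assert (HgMb : (g | Mb)%Z) by (rewrite Hg; apply Z.gcd_divide_l).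
 set (dd := (Mb / g)%Z).
 assert (Hdd : (0 < dd)%Z). { destruct HgMb as [q Hq]. unfold dd. rewrite Hq, Z.div_mul by lia. nia. }
 assert (EMg : (((Z.of_nat b) * Mb) / g = (Z.of_nat b) * dd)%Z) by (unfold dd; apply Z.divide_div_mul_exact; lia || auto).
 set (N := Z.of_nat (b ^ m)).
 assert (HN : (0 <= N)%Z) by lia.
 assert (E1 : LR (Hset N) (fun h => rr ((Z.of_nat b) * Mb) Mb (h * k) * / IZR (Z.abs h)) =
   IZR ((Z.of_nat b) * Mb) * Cd N ((Z.of_nat b) * dd) - IZR Mb * Cd N dd).
 { unfold Cd. rewrite <- !LR_scal, <- LR_minus. apply LR_ext; intros h _. unfold rr.
   rewrite (dvz_eq ((Z.of_nat b) * Mb) (h * k) ((Z.of_nat b) * dd) h); try nia.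
   rewrite (dvz_eq Mb (h * k) dd h); try nia.
   destruct (dvz ((Z.of_nat b) * dd) h); destruct (dvz dd h); ring.
   unfold dd; rewrite Hg; apply divgcd; lia.
   rewrite <- EMg. apply divgcd; lia. }
 rewrite E1. assert (Hm := Cd_mono N (Z.to_nat dd) b HN ltac:(lia) ltac:(lia)).
 rewrite Nat2Z.inj_mul, Z2Nat.id in Hm by lia.
 rewrite INR_IZR_INZ in Hm. rewrite mult_IZR.
 assert (0 < IZR Mb) by (apply IZR_lt; lia).
 assert (IZR Mb * (IZR (Z.of_nat b) * Cd N ((Z.of_nat b) * dd)) <= IZR Mb * Cd N dd) by (apply Rmult_le_compat_l; lra).
 lra. Qed.

Lemma Rk_sum_nonneg b m w j : prime (Z.of_nat b) -> (w < m)%nat -> (m - w = S j)%nat ->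
  0 <= LR (seq 0 (b ^ m)) (fun k => Rk b m w j (Z.of_nat k)).
Proof. intros hb hw hj. assert (H2 := prime_ge_2 _ hb).
 assert (E : (b ^ m = b ^ (m - w) * b ^ w)%nat) by (rewrite <- Nat.pow_add_r; f_equal; lia).
 assert (0 < b ^ (m - w))%nat by (apply Nat.neq_0_lt_0, Nat.pow_nonzero; lia).
 set (F := fun (z h : Z) => (if dvz (Z.of_nat (b ^ (m - w))) (h * z) then INR (b ^ m) else 0) * / IZR (Z.abs h)).
 assert (HE : RtoC (LR (seq 0 (b ^ m)) (fun k => Rk b m w j (Z.of_nat k))) =
              RtoC (LR (Zset b m w) (fun z => LR (Hset (Z.of_nat (b ^ m))) (F z)))).
 { rewrite <- !LC_RtoC.
   rewrite (LC_ext _ (fun k => RtoC (Rk b m w j (Z.of_nat k))) (fun k => T b m w (Z.of_nat k))).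
   2:{ intros; symmetry; apply T_real; auto. }
   rewrite (LC_ext _ (fun k => T b m w (Z.of_nat k)) (fun k => LC (Zset b m w) (fun z => LC (Hset (Z.of_nat (b ^ m))) (fun h =>
     Cmult (cexp (2 * PI * IZR ((h * z) * Z.of_nat k) / IZR (Z.of_nat (b ^ (m - w))))) (RtoC (/ IZR (Z.abs h))))))).
   2:{ intros k _. rewrite T_expr by lia. apply LC_ext; intros z _. apply LC_ext; intros h _.
       do 5 f_equal. ring. }
   rewrite LC_swap. apply LC_ext; intros z _.
   rewrite <- LC_RtoC.
   rewrite LC_swap. apply LC_ext; intros h _.
   rewrite LC_scal_r. fold (GS (Z.of_nat (b ^ (m - w))) (b ^ m) (h * z)).
   rewrite geo; [| lia | rewrite E, Nat2Z.inj_mul; apply Z.divide_factor_l].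
   unfold F. destruct (dvz _ _); now rewrite RtoC_mult. }
 apply RtoC_inj in HE. rewrite HE.
 apply LR_nonneg; intros z _. apply LR_nonneg; intros h _. unfold F.
 apply Rmult_le_pos. destruct (dvz _ _). apply pos_INR. lra. apply inv_nonneg, IZR_le; lia. Qed.

Lemma dvn_Z d i : (0 < d)%nat -> (dvn d i = true <-> (Z.of_nat d | Z.of_nat i)%Z).
Proof. intros Hd. unfold dvn. rewrite Nat.eqb_eq. rewrite <- Z.mod_divide by lia.
 rewrite <- Nat2Z.inj_mod. lia. Qed.

Lemma main_lt b m w j : prime (Z.of_nat b) -> (w < m)%nat -> (m - w = S j)%nat ->
  lsumR (Zrange 1 (Z.of_nat (b ^ m) - 1))
        (fun k => Cmod (T b m w k) / INR (length (Zset b m w)))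
  <= 2 * INR (b ^ w) * S_N (Z.of_nat (b ^ m)).
Proof. intros hb hw hj. assert (H2 := prime_ge_2 _ hb).
 assert (E : (b ^ m = b ^ (m - w) * b ^ w)%nat) by (rewrite <- Nat.pow_add_r; f_equal; lia).
 assert (HM : (b ^ (m - w) = b * b ^ j)%nat) by (rewrite hj; reflexivity).
 assert (Hbj : (0 < b ^ j)%nat) by (apply Nat.neq_0_lt_0, Nat.pow_nonzero; lia).
 assert (HMp : (0 < b ^ (m - w))%nat) by (apply Nat.neq_0_lt_0, Nat.pow_nonzero; lia).
 assert (HKp : (0 < b ^ w)%nat) by (apply Nat.neq_0_lt_0, Nat.pow_nonzero; lia).
 assert (HNp : (0 < b ^ m)%nat) by (apply Nat.neq_0_lt_0, Nat.pow_nonzero; lia).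
 rewrite (Zset_len b m w j) by auto.
 set (L := IZR (Z.of_nat (b ^ (m - w))) - IZR (Z.of_nat (b ^ j))).
 assert (HL : 0 < L). { unfold L. rewrite HM, Nat2Z.inj_mul, mult_IZR.
   assert (1 <= IZR (Z.of_nat (b ^ j))) by (apply IZR_le; lia).
   assert (2 <= IZR (Z.of_nat b)) by (apply IZR_le; lia). nra. }
 set (SS := S_N (Z.of_nat (b ^ m))).
 assert (HS : 0 <= SS) by apply S_N_nonneg.
 set (R := fun i : nat => Rk b m w j (Z.of_nat i)).
 assert (HR0 : R 0%nat = L * SS) by (apply Rk_div; auto; apply Z.divide_0_r).
 change lsumR with (@LR Z). unfold Zrange. rewrite LR_map.
 replace (Z.to_nat (Z.of_nat (b ^ m) - 1 - 1 + 1)) with (b ^ m - 1)%nat by lia.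
 rewrite (LR_ext _ _ (fun i => / L * Rabs (R (S i)))).
 2:{ intros i _. rewrite T_real with (j := j) by auto. rewrite Cmod_R. unfold R.
     rewrite Nat2Z.inj_succ, <- Z.add_1_l. unfold Rdiv; ring. }
 rewrite LR_scal.
 assert (Hsh := LR_shift (b ^ m - 1) (fun i => Rabs (R i))). cbv beta in Hsh.
 replace (S (b ^ m - 1))%nat with (b ^ m)%nat in Hsh by lia.
 assert (Habs : LR (seq 0 (b ^ m)) (fun i => Rabs (R i)) =
   2 * LR (seq 0 (b ^ m)) (fun i => if dvn (b ^ (m - w)) i then R i else 0) - LR (seq 0 (b ^ m)) R).
 { rewrite <- LR_scal, <- LR_minus. apply LR_ext; intros i _.
   destruct (dvn (b ^ (m - w)) i) eqn:D.
   - apply dvn_Z in D; auto. unfold R. rewrite Rk_div by auto. fold SS L. rewrite Rabs_pos_eq. ring. nra.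
   - assert (~ (Z.of_nat (b ^ (m - w)) | Z.of_nat i)%Z). { intros C. apply dvn_Z in C; auto. congruence. }
     assert (R i <= 0) by (apply Rk_neg; auto). rewrite Rabs_left1; auto. ring. }
 assert (Hmult : LR (seq 0 (b ^ m)) (fun i => if dvn (b ^ (m - w)) i then R i else 0) = INR (b ^ w) * (L * SS)).
 { rewrite (LR_ext _ _ (fun i => if dvn (b ^ (m - w)) i then L * SS else 0)).
   2:{ intros i _. destruct (dvn (b ^ (m - w)) i) eqn:D; auto. apply dvn_Z in D; auto.
       unfold R. rewrite Rk_div by auto. reflexivity. }
   rewrite E, LR_mult by auto. rewrite LR_const, length_seq. reflexivity. }
 assert (Hsum := Rk_sum_nonneg b m w j hb hw hj). fold R in Hsum.
 rewrite HR0, Rabs_pos_eq in Hsh by nra.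
 assert (0 <= L * SS) by nra.
 assert (LR (seq 0 (b ^ m - 1)) (fun i => Rabs (R (S i))) <= 2 * INR (b ^ w) * (L * SS)) by lra.
 apply (Rmult_le_reg_l L); auto.
 replace (L * (/ L * LR (seq 0 (b ^ m - 1)) (fun i => Rabs (R (S i))))) with (LR (seq 0 (b ^ m - 1)) (fun i => Rabs (R (S i)))) by (field; lra).
 lra. Qed.

Lemma main_ge b m w : prime (Z.of_nat b) -> (m <= w)%nat ->
  lsumR (Zrange 1 (Z.of_nat (b ^ m) - 1))
        (fun k => Cmod (T b m w k) / INR (length (Zset b m w)))
  <= 2 * INR (b ^ m) * S_N (Z.of_nat (b ^ m)).
Proof. intros hb hw. assert (H2 := prime_ge_2 _ hb).
 assert (HNp : (0 < b ^ m)%nat) by (apply Nat.neq_0_lt_0, Nat.pow_nonzero; lia).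
 assert (HZ : Zset b m w = [1%Z]). { unfold Zset. replace (w <? m)%nat with false; auto.
   symmetry; apply Nat.ltb_ge; lia. }
 assert (HT : forall k, T b m w k = RtoC (S_N (Z.of_nat (b ^ m)))).
 { intros k. unfold T. rewrite HZ. change lsumC with (@LC Z). unfold S_N. change lsumR with (@LR Z).
   unfold LC at 1. simpl fold_right. rewrite Cplus_0_r. rewrite <- LC_RtoC. apply LC_ext; intros h _.
   assert (E : (b ^ w = b ^ m * b ^ (w - m))%nat) by (rewrite <- Nat.pow_add_r; f_equal; lia).
   replace (2 * PI * IZR (h * k * Z.of_nat (b ^ w) * 1) / IZR (Z.of_nat (b ^ m)))
     with (2 * PI * IZR (h * k * Z.of_nat (b ^ (w - m)))).
   rewrite cexp_int. apply Cmult_1_l.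
   rewrite E, !Nat2Z.inj_mul, !mult_IZR. field. apply not_0_IZR; lia. }
 change lsumR with (@LR Z). rewrite HZ.
 rewrite (LR_ext _ _ (fun _ => S_N (Z.of_nat (b ^ m)))).
 2:{ intros k _. rewrite HT, Cmod_R, Rabs_pos_eq by apply S_N_nonneg. simpl length.
     change (INR 1) with 1. field. }
 rewrite LR_const. unfold Zrange. rewrite length_map, length_seq.
 assert (HS := S_N_nonneg (Z.of_nat (b ^ m))).
 apply Rmult_le_compat_r; auto.
 replace (Z.to_nat (Z.of_nat (b ^ m) - 1 - 1 + 1)) with (b ^ m - 1)%nat by lia.
 rewrite minus_INR by lia. assert (0 <= INR (b ^ m)) by apply pos_INR. simpl INR. lra. Qed.

Theorem lemma1 (b m w : nat) (hb : prime (Z.of_nat b)) (hm : (0 < m)%nat) :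
  lsumR (Zrange 1 (Z.of_nat (b ^ m) - 1))
        (fun k => Cmod (T b m w k) / INR (length (Zset b m w)))
  <= 2 * INR (b ^ Nat.min w m) * S_N (Z.of_nat (b ^ m)).
Proof. destruct (Nat.lt_ge_cases w m) as [H|H].
 - rewrite Nat.min_l by lia. apply (main_lt b m w (m - w - 1)); auto; lia.
 - rewrite Nat.min_r by lia. apply main_ge; auto. Qed.
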